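(* Let $\eta$ be a homogeneous integrable 2-form of degree two on $\mathbb{C}^4$ with $d\eta=d(z_1z_2)\wedge dz_3\wedge dz_4$ (i.e. $d\eta=i_X\nu$ with $X=z_1\partial/\partial z_1-z_2\partial/\partial z_2$, $\nu=dz_1\wedge\cdots\wedge dz_4$). Then there exist linear forms $A(z_3,z_4),B(z_3,z_4)$, a constant $a\in\mathbb{C}$ and a homogeneous quadratic polynomial $q(z_3,z_4)$ such that $\eta=d(z_1z_2)\wedge\big(A(z_3,z_4)\,dz_3+B(z_3,z_4)\,dz_4\big)+\big(a\,z_1z_2+q(z_3,z_4)\big)\,dz_3\wedge dz_4$.
   Context: A form is homogeneous of degree $m$ if its coefficients are homogeneous polynomials of degree $m$. A holomorphic $q$-form $\eta$ is integrable if every point $p$ outside its zero set has a neighborhood $V$ with holomorphic 1-forms $\omega_1,\dots,\omega_q$ on $V$ such that $\eta|_V=\omega_1\wedge\cdots\wedge\omega_q$ and $d\omega_j\wedge\eta=0$ for all $j$. *)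

(* Defs.v *)
From Stdlib Require Import Reals.
Open Scope R_scope.

Definition CC : Type := (R * R)%type.
Definition C0 : CC := (0, 0).
Definition Cof (x : R) : CC := (x, 0).
Definition Cadd (z w : CC) : CC := (fst z + fst w, snd z + snd w).
Definition Copp (z : CC) : CC := (- fst z, - snd z).
Definition Csub (z w : CC) : CC := Cadd z (Copp w).
Definition Cmul (z w : CC) : CC :=
  (fst z * fst w - snd z * snd w, fst z * snd w + snd z * fst w).
Definition Cnorm (z : CC) : R := sqrt (fst z * fst z + snd z * snd z).

Inductive I4 : Type := i1 | i2 | i3 | i4.
Definition C4 : Type := I4 -> CC.

Definition sum4 (f : I4 -> CC) : CC :=
  Cadd (Cadd (Cadd (f i1) (f i2)) (f i3)) (f i4).
Definition p4add (p h : C4) : C4 := fun i => Cadd (p i) (h i).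
Definition p4sub (p h : C4) : C4 := fun i => Csub (p i) (h i).
Definition norm4 (h : C4) : R :=
  Cnorm (h i1) + Cnorm (h i2) + Cnorm (h i3) + Cnorm (h i4).
Definition tvec (i : I4) (t : CC) : C4 :=
  fun k => match i, k with
           | i1, i1 | i2, i2 | i3, i3 | i4, i4 => t
           | _, _ => C0 end.

Definition idx (i : I4) : nat :=
  match i with i1 => 1%nat | i2 => 2%nat | i3 => 3%nat | i4 => 4%nat end.
Definition ilt (i j : I4) : Prop := (idx i < idx j)%nat.

Definition is_open (V : C4 -> Prop) : Prop :=
  forall p, V p -> exists r, 0 < r /\ forall q, norm4 (p4sub q p) < r -> V q.

Definition holo_on (V : C4 -> Prop) (f : C4 -> CC) : Prop :=
  forall p, V p -> exists c : I4 -> CC,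
    forall eps, 0 < eps -> exists delta, 0 < delta /\
      forall h, norm4 h < delta ->
        Cnorm (Csub (Csub (f (p4add p h)) (f p)) (sum4 (fun i => Cmul (c i) (h i))))
          <= eps * norm4 h.

Definition pderiv (f : C4 -> CC) (i : I4) (p : C4) (c : CC) : Prop :=
  forall eps, 0 < eps -> exists delta, 0 < delta /\
    forall t, Cnorm t < delta ->
      Cnorm (Csub (Csub (f (p4add p (tvec i t))) (f p)) (Cmul c t)) <= eps * Cnorm t.

(** * Differential forms on CC^4 (pointwise coefficients)
    A 1-form is [w : I4 -> C4 -> CC], meaning  sum_i w i dz_i.
    A 2-form is [a : I4 -> I4 -> C4 -> CC], meaning  sum_{i<j} a i j dz_i /\ dz_j
    (only the entries with i < j are meaningful). *)

(** coefficient of dz_i /\ dz_j in (w1 /\ w2) *)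
Definition wedge11 (w1 w2 : I4 -> CC) (i j : I4) : CC :=
  Csub (Cmul (w1 i) (w2 j)) (Cmul (w1 j) (w2 i)).

(** coefficient of dz_i /\ dz_j in d w, where D i k = d(w_k)/d z_i *)
Definition dform1 (D : I4 -> I4 -> CC) (i j : I4) : CC := Csub (D i j) (D j i).

(** coefficient of dz_1/\dz_2/\dz_3/\dz_4 in a /\ b for 2-forms a, b *)
Definition wedge22 (a b : I4 -> I4 -> CC) : CC :=
  Cadd (Cadd (Cadd (Cadd (Cadd
    (Cmul (a i1 i2) (b i3 i4))
    (Copp (Cmul (a i1 i3) (b i2 i4))))
    (Cmul (a i1 i4) (b i2 i3)))
    (Cmul (a i2 i3) (b i1 i4)))
    (Copp (Cmul (a i2 i4) (b i1 i3))))
    (Cmul (a i3 i4) (b i1 i2)).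

(** coefficient of dz_i/\dz_j/\dz_k in d a, where D m i j = d(a_{ij})/d z_m *)
Definition dform2 (D : I4 -> I4 -> I4 -> CC) (i j k : I4) : CC :=
  Cadd (Csub (D i j k) (D j i k)) (D k i j).

Definition integrable2 (eta : I4 -> I4 -> C4 -> CC) : Prop :=
  forall p, (exists i j, ilt i j /\ eta i j p <> C0) ->
  exists V : C4 -> Prop, is_open V /\ V p /\
  exists w1 w2 : I4 -> C4 -> CC,
    (forall k, holo_on V (w1 k)) /\ (forall k, holo_on V (w2 k)) /\
    (forall q, V q -> forall i j, ilt i j ->
        eta i j q = wedge11 (fun k => w1 k q) (fun k => w2 k q) i j) /\
    exists D1 D2 : I4 -> I4 -> C4 -> CC,
      (forall q i k, V q -> pderiv (w1 k) i q (D1 i k q)) /\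
      (forall q i k, V q -> pderiv (w2 k) i q (D2 i k q)) /\
      (forall q, V q ->
         wedge22 (dform1 (fun i k => D1 i k q)) (fun i j => eta i j q) = C0 /\
         wedge22 (dform1 (fun i k => D2 i k q)) (fun i j => eta i j q) = C0).

Definition hom_quad (f : C4 -> CC) : Prop :=
  exists c : I4 -> I4 -> CC,
    forall z, f z = sum4 (fun k => sum4 (fun l => Cmul (c k l) (Cmul (z k) (z l)))).

(* Main.v *)
Require Import Defs.
From Stdlib Require Import Reals Lra Psatz Classical FunctionalExtensionality.
From Coquelicot Require Complex.
Open Scope R_scope.

Definition C1 : CC := (1, 0).
Lemma CC_ring : ring_theory C0 C1 Cadd Cmul Csub Copp eq.
Proof.
  constructor; intros; repeat match goal with x : CC |- _ => destruct x end;
  unfold C0, C1, Cadd, Cmul, Csub, Copp; simpl; try reflexivity; f_equal; ring.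
Qed.
Add Ring CCr : CC_ring.

Lemma Cn_eq z : Cnorm z = Complex.Cmod z.
Proof. unfold Cnorm, Complex.Cmod. f_equal. simpl. ring. Qed.
Lemma Cn_tri x y : Cnorm (Cadd x y) <= Cnorm x + Cnorm y.
Proof. rewrite !Cn_eq. exact (Complex.Cmod_triangle x y). Qed.
Lemma Cn_mul x y : Cnorm (Cmul x y) = Cnorm x * Cnorm y.
Proof. rewrite !Cn_eq. exact (Complex.Cmod_mult x y). Qed.
Lemma Cn_opp x : Cnorm (Copp x) = Cnorm x.
Proof. rewrite !Cn_eq. exact (Complex.Cmod_opp x). Qed.
Lemma Cn_ge0 x : 0 <= Cnorm x.
Proof. rewrite !Cn_eq. apply Complex.Cmod_ge_0. Qed.
Lemma Cn_0 : Cnorm C0 = 0.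
Proof. unfold Cnorm, C0; simpl. replace (0*0+0*0) with 0 by ring. apply sqrt_0. Qed.
Lemma Cn_eq0 x : Cnorm x = 0 -> x = C0.
Proof. rewrite Cn_eq. intro H. apply Complex.Cmod_eq_0 in H. exact H. Qed.
Lemma Cn_of r : Cnorm (Cof r) = Rabs r.
Proof. rewrite Cn_eq. exact (Complex.Cmod_R r). Qed.
Lemma Cn_sub x y : Cnorm (Csub x y) <= Cnorm x + Cnorm y.
Proof. unfold Csub. eapply Rle_trans. apply Cn_tri. rewrite Cn_opp. lra. Qed.
Lemma Cmul_integral a b : Cmul a b = C0 -> a <> C0 -> b = C0.
Proof.
  intros H Ha. destruct (Req_dec (Cnorm b) 0) as [E|E]. now apply Cn_eq0.
  exfalso. apply Ha. apply Cn_eq0. assert (Cnorm (Cmul a b) = 0) by (rewrite H; apply Cn_0).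
  rewrite Cn_mul in H0. apply Rmult_integral in H0. tauto.
Qed.


Lemma Csub_Cadd_l a b : Csub (Cadd a b) a = b. Proof. ring. Qed.

Lemma norm4_tvec p m t : norm4 (p4sub (p4add p (tvec m t)) p) = Cnorm t.
Proof.
  unfold norm4, p4sub, p4add. rewrite !Csub_Cadd_l.
  destruct m; simpl; rewrite Cn_0; ring.
Qed.

Lemma pderiv_unique f i p c1 c2 : pderiv f i p c1 -> pderiv f i p c2 -> c1 = c2.
Proof.
  intros H1 H2. destruct (Req_dec (Cnorm (Csub c1 c2)) 0) as [E|E].
  - apply Cn_eq0 in E. replace c1 with (Cadd (Csub c1 c2) c2) by ring. rewrite E. ring.
  - set (d := Cnorm (Csub c1 c2)) in *.
    assert (Hd : 0 < d) by (pose proof (Cn_ge0 (Csub c1 c2)); unfold d in *; lra).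
    destruct (H1 (d/4)) as [d1 [Hd1 K1]]; [lra|].
    destruct (H2 (d/4)) as [d2 [Hd2 K2]]; [lra|].
    set (r := Rmin d1 d2 / 2).
    assert (Hr : 0 < r) by (unfold r; apply Rmin_case; lra).
    assert (Hr1 : r < d1) by (unfold r; pose proof (Rmin_l d1 d2); lra).
    assert (Hr2 : r < d2) by (unfold r; pose proof (Rmin_r d1 d2); lra).
    assert (Ht : Cnorm (Cof r) = r) by (rewrite Cn_of; apply Rabs_pos_eq; lra).
    specialize (K1 (Cof r)). specialize (K2 (Cof r)). rewrite Ht in K1, K2.
    specialize (K1 Hr1). specialize (K2 Hr2).
    set (D := Csub (f (p4add p (tvec i (Cof r)))) (f p)) in *.
    assert (E2 : Cmul (Csub c1 c2) (Cof r) = Csub (Csub D (Cmul c2 (Cof r))) (Csub D (Cmul c1 (Cof r)))) by ring.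
    pose proof (Cn_sub (Csub D (Cmul c2 (Cof r))) (Csub D (Cmul c1 (Cof r)))).
    rewrite <- E2, Cn_mul, Ht in H. fold d in H. nra.
Qed.

Lemma pderiv_local f g i p c r : 0 < r ->
  (forall t, Cnorm t < r -> f (p4add p (tvec i t)) = g (p4add p (tvec i t))) ->
  f p = g p -> pderiv g i p c -> pderiv f i p c.
Proof.
  intros Hr Hfg Hp H eps Heps. destruct (H eps Heps) as [d [Hd K]].
  exists (Rmin d r). split. apply Rmin_case; lra.
  intros t Ht. rewrite Hfg, Hp. apply K. pose proof (Rmin_l d r); lra.
  pose proof (Rmin_r d r); lra.
Qed.

Lemma pderiv_sub f g i p a b : pderiv f i p a -> pderiv g i p b ->
  pderiv (fun q => Csub (f q) (g q)) i p (Csub a b).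
Proof.
  intros Hf Hg eps Heps.
  destruct (Hf (eps/2)) as [d1 [Hd1 K1]]; [lra|].
  destruct (Hg (eps/2)) as [d2 [Hd2 K2]]; [lra|].
  exists (Rmin d1 d2). split. apply Rmin_case; lra.
  intros t Ht. specialize (K1 t ltac:(pose proof (Rmin_l d1 d2); lra)).
  specialize (K2 t ltac:(pose proof (Rmin_r d1 d2); lra)).
  set (x := f (p4add p (tvec i t))) in *. set (y := g (p4add p (tvec i t))) in *.
  replace (Csub (Csub (Csub x y) (Csub (f p) (g p))) (Cmul (Csub a b) t))
    with (Csub (Csub (Csub x (f p)) (Cmul a t)) (Csub (Csub y (g p)) (Cmul b t))) by ring.
  eapply Rle_trans. apply Cn_sub. lra.
Qed.

Lemma pderiv_mul f g i p a b : pderiv f i p a -> pderiv g i p b ->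
  pderiv (fun q => Cmul (f q) (g q)) i p (Cadd (Cmul a (g p)) (Cmul (f p) b)).
Proof.
  intros Hf Hg eps Heps.
  set (K := Cnorm (f p) + Cnorm a * Cnorm b + Cnorm a + Cnorm (g p) + Cnorm b + 1).
  assert (HK : 1 <= K) by (unfold K; pose proof (Cn_ge0 (f p)); pose proof (Cn_ge0 a);
    pose proof (Cn_ge0 b); pose proof (Cn_ge0 (g p)); nra).
  set (e := Rmin 1 (eps / K)).
  assert (He : 0 < e) by (unfold e; apply Rmin_glb_lt; [lra|]; apply Rdiv_lt_0_compat; lra).
  assert (He1 : e <= 1) by apply Rmin_l.
  assert (HeK : e * K <= eps).
  { assert (e <= eps / K) by apply Rmin_r.
    apply (Rmult_le_compat_r K) in H; [|lra]. unfold Rdiv in H.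
    rewrite Rmult_assoc, Rinv_l in H by lra. lra. }
  destruct (Hf e He) as [d1 [Hd1 K1]]. destruct (Hg e He) as [d2 [Hd2 K2]].
  exists (Rmin e (Rmin d1 d2)). split. apply Rmin_glb_lt; [lra|apply Rmin_glb_lt; lra].
  intros t Ht.
  assert (Ht0 : Cnorm t < e) by (pose proof (Rmin_l e (Rmin d1 d2)); lra).
  assert (Ht1 : Cnorm t < d1) by (pose proof (Rmin_r e (Rmin d1 d2)); pose proof (Rmin_l d1 d2); lra).
  assert (Ht2 : Cnorm t < d2) by (pose proof (Rmin_r e (Rmin d1 d2)); pose proof (Rmin_r d1 d2); lra).
  specialize (K1 t Ht1). specialize (K2 t Ht2).
  set (x := f (p4add p (tvec i t))) in *. set (y := g (p4add p (tvec i t))) in *.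
  set (u := Csub (Csub x (f p)) (Cmul a t)) in *.
  set (v := Csub (Csub y (g p)) (Cmul b t)) in *.
  replace (Csub (Csub (Cmul x y) (Cmul (f p) (g p))) (Cmul (Cadd (Cmul a (g p)) (Cmul (f p) b)) t))
   with (Cadd (Cadd (Cadd (Cmul (f p) v) (Cmul (Cmul a b) (Cmul t t))) (Cmul (Cmul a t) v))
          (Cmul u (Cadd (Cadd (g p) (Cmul b t)) v)))
   by (unfold u, v; ring).
  pose proof (Cn_ge0 (f p)); pose proof (Cn_ge0 a); pose proof (Cn_ge0 b);
  pose proof (Cn_ge0 (g p)); pose proof (Cn_ge0 t); pose proof (Cn_ge0 u); pose proof (Cn_ge0 v).
  eapply Rle_trans. apply Cn_tri. eapply Rle_trans. apply Rplus_le_compat_r. apply Cn_tri.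
  eapply Rle_trans. apply Rplus_le_compat_r. apply Rplus_le_compat_r. apply Cn_tri.
  rewrite !Cn_mul.
  assert (Hw : Cnorm (Cadd (Cadd (g p) (Cmul b t)) v) <= Cnorm (g p) + Cnorm b + 1).
  { eapply Rle_trans. apply Cn_tri. eapply Rle_trans. apply Rplus_le_compat_r. apply Cn_tri.
    rewrite Cn_mul. nra. }
  set (w := Cnorm (Cadd (Cadd (g p) (Cmul b t)) v)) in *.
  assert (Cnorm (f p) * Cnorm v <= Cnorm (f p) * e * Cnorm t) by nra.
  assert (Hab : 0 <= Cnorm a * Cnorm b) by (apply Rmult_le_pos; lra).
  assert (Htt : Cnorm t * Cnorm t <= e * Cnorm t) by (apply Rmult_le_compat_r; lra).
  assert (Cnorm a * Cnorm b * (Cnorm t * Cnorm t) <= Cnorm a * Cnorm b * e * Cnorm t)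
    by (rewrite Rmult_assoc with (r1 := Cnorm a * Cnorm b); apply Rmult_le_compat_l; lra).
  assert (Hvt : Cnorm v <= Cnorm t) by nra.
  assert (Hat : 0 <= Cnorm a * Cnorm t) by (apply Rmult_le_pos; lra).
  assert (Cnorm a * Cnorm t * Cnorm v <= Cnorm a * e * Cnorm t).
  { apply Rle_trans with (Cnorm a * Cnorm t * Cnorm t). apply Rmult_le_compat_l; lra.
    rewrite Rmult_assoc, Rmult_assoc. apply Rmult_le_compat_l. lra. lra. }
  assert (Cnorm u * w <= e * Cnorm t * (Cnorm (g p) + Cnorm b + 1)).
  { assert (0 <= w) by (unfold w; apply Cn_ge0). apply Rmult_le_compat; lra. }
  assert (e * K * Cnorm t <= eps * Cnorm t) by (apply Rmult_le_compat_r; lra).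
  unfold K in *. nra.
Qed.

Definition Dp (a b : I4 -> CC) (A B : I4 -> I4 -> CC) (m i j : I4) : CC := Csub (Cadd (Cmul (A m i) (b j)) (Cmul (a i) (B m j)))
   (Cadd (Cmul (A m j) (b i)) (Cmul (a j) (B m i))).
Definition T4 (T : I4 -> I4 -> I4 -> CC) (a : I4 -> CC) : CC :=
  Cadd (Cadd (Cadd (Cmul (T i1 i2 i3) (a i4)) (Copp (Cmul (T i1 i2 i4) (a i3))))
    (Cmul (T i1 i3 i4) (a i2))) (Copp (Cmul (T i2 i3 i4) (a i1))).
Lemma alg1 a b A B : T4 (dform2 (Dp a b A B)) a = Copp (wedge22 (dform1 A) (wedge11 a b)).
Proof. unfold T4, dform2, Dp, wedge22, dform1, wedge11; cbv beta. ring. Qed.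
Lemma alg2 a b A B : T4 (dform2 (Dp a b A B)) b = Copp (wedge22 (dform1 B) (wedge11 a b)).
Proof. unfold T4, dform2, Dp, wedge22, dform1, wedge11; cbv beta. ring. Qed.


Lemma R6 a0 a1 a2 a3 a4 a5 :
  (forall t, a0 + a1*t + a2*(t*t) + a3*(t*t*t) + a4*(t*t*t*t) + a5*(t*t*t*t*t) = 0) ->
  a0 = 0 /\ a1 = 0 /\ a2 = 0 /\ a3 = 0 /\ a4 = 0 /\ a5 = 0.
Proof.
  intro H. pose proof (H 0). pose proof (H 1). pose proof (H 2). pose proof (H 3).
  pose proof (H 4). pose proof (H 5). lra.
Qed.

Definition poly5 (k0 k1 k2 k3 k4 k5 T : CC) : CC :=
  Cadd (Cadd (Cadd (Cadd (Cadd k0 (Cmul k1 T)) (Cmul k2 (Cmul T T))) (Cmul k3 (Cmul T (Cmul T T))))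
    (Cmul k4 (Cmul T (Cmul T (Cmul T T))))) (Cmul k5 (Cmul T (Cmul T (Cmul T (Cmul T T))))).

Lemma poly5_zero k0 k1 k2 k3 k4 k5 : (forall t, poly5 k0 k1 k2 k3 k4 k5 (Cof t) = C0) ->
  k0 = C0 /\ k1 = C0 /\ k2 = C0 /\ k3 = C0 /\ k4 = C0 /\ k5 = C0.
Proof.
  intro H. destruct k0 as [x0 y0], k1 as [x1 y1], k2 as [x2 y2], k3 as [x3 y3], k4 as [x4 y4], k5 as [x5 y5].
  assert (A : forall t, x0 + x1*t + x2*(t*t) + x3*(t*t*t) + x4*(t*t*t*t) + x5*(t*t*t*t*t) = 0 /\
                        y0 + y1*t + y2*(t*t) + y3*(t*t*t) + y4*(t*t*t*t) + y5*(t*t*t*t*t) = 0).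
  { intro t. specialize (H t). unfold poly5, Cof, Cmul, Cadd, C0 in H. simpl in H.
    injection H as H1 H2. split; [rewrite <- H1 | rewrite <- H2]; ring. }
  destruct (R6 x0 x1 x2 x3 x4 x5) as (?&?&?&?&?&?). intro t; apply A.
  destruct (R6 y0 y1 y2 y3 y4 y5) as (?&?&?&?&?&?). intro t; apply A.
  subst. unfold C0. repeat split.
Qed.

Definition cub (f0 f1 f2 f3 T : CC) : CC :=
  Cadd (Cadd (Cadd f0 (Cmul f1 T)) (Cmul f2 (Cmul T T))) (Cmul f3 (Cmul T (Cmul T T))).

Lemma ext_key f0 f1 f2 f3 g0 g1 g2 : g2 <> C0 ->
  (forall t, cub g0 g1 g2 C0 (Cof t) <> C0 -> cub f0 f1 f2 f3 (Cof t) = C0) -> f0 = C0.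
Proof.
  intros Hg H.
  assert (K : forall t, poly5 (Cmul f0 g0) (Cadd (Cmul f0 g1) (Cmul f1 g0))
     (Cadd (Cadd (Cmul f0 g2) (Cmul f1 g1)) (Cmul f2 g0))
     (Cadd (Cadd (Cmul f1 g2) (Cmul f2 g1)) (Cmul f3 g0))
     (Cadd (Cmul f2 g2) (Cmul f3 g1)) (Cmul f3 g2) (Cof t) = C0).
  { intro t. transitivity (Cmul (cub f0 f1 f2 f3 (Cof t)) (cub g0 g1 g2 C0 (Cof t))).
    unfold poly5, cub; ring.
    destruct (classic (cub g0 g1 g2 C0 (Cof t) = C0)) as [E|E].
    rewrite E; ring. rewrite (H t E); ring. }
  apply poly5_zero in K. destruct K as (_&_&K2&K3&K4&K5).
  assert (E3 : f3 = C0) by (apply (Cmul_integral g2); [rewrite <- K5; ring | exact Hg]).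
  subst f3.
  assert (E2 : f2 = C0) by (apply (Cmul_integral g2); [rewrite <- K4; ring | exact Hg]).
  subst f2.
  assert (E1 : f1 = C0) by (apply (Cmul_integral g2); [rewrite <- K3; ring | exact Hg]).
  subst f1.
  apply (Cmul_integral g2); [rewrite <- K2; ring | exact Hg].
Qed.


Record QS := mkQS { q11 : CC; q12 : CC; q13 : CC; q14 : CC; q22 : CC; q23 : CC;
  q24 : CC; q33 : CC; q34 : CC; q44 : CC }.

Definition Qv (s : QS) (z : C4) : CC :=
  Cadd (Cadd (Cadd (Cadd (Cadd (Cadd (Cadd (Cadd (Cadd
   (Cmul (q11 s) (Cmul (z i1) (z i1))) (Cmul (q12 s) (Cmul (z i1) (z i2))))
   (Cmul (q13 s) (Cmul (z i1) (z i3)))) (Cmul (q14 s) (Cmul (z i1) (z i4))))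
   (Cmul (q22 s) (Cmul (z i2) (z i2)))) (Cmul (q23 s) (Cmul (z i2) (z i3))))
   (Cmul (q24 s) (Cmul (z i2) (z i4)))) (Cmul (q33 s) (Cmul (z i3) (z i3))))
   (Cmul (q34 s) (Cmul (z i3) (z i4)))) (Cmul (q44 s) (Cmul (z i4) (z i4))).

Definition dbl (a : CC) := Cadd a a.

Definition DQ (s : QS) (m : I4) (z : C4) : CC :=
  match m with
  | i1 => Cadd (Cadd (Cadd (Cmul (dbl (q11 s)) (z i1)) (Cmul (q12 s) (z i2))) (Cmul (q13 s) (z i3))) (Cmul (q14 s) (z i4))
  | i2 => Cadd (Cadd (Cadd (Cmul (q12 s) (z i1)) (Cmul (dbl (q22 s)) (z i2))) (Cmul (q23 s) (z i3))) (Cmul (q24 s) (z i4))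
  | i3 => Cadd (Cadd (Cadd (Cmul (q13 s) (z i1)) (Cmul (q23 s) (z i2))) (Cmul (dbl (q33 s)) (z i3))) (Cmul (q34 s) (z i4))
  | i4 => Cadd (Cadd (Cadd (Cmul (q14 s) (z i1)) (Cmul (q24 s) (z i2))) (Cmul (q34 s) (z i3))) (Cmul (dbl (q44 s)) (z i4))
  end.

Definition qdiag (s : QS) (m : I4) : CC :=
  match m with i1 => q11 s | i2 => q22 s | i3 => q33 s | i4 => q44 s end.

Lemma hq_QS f : hom_quad f -> exists s, forall z, f z = Qv s z.
Proof.
  intros [c Hc].
  exists (mkQS (c i1 i1) (Cadd (c i1 i2) (c i2 i1)) (Cadd (c i1 i3) (c i3 i1)) (Cadd (c i1 i4) (c i4 i1))
    (c i2 i2) (Cadd (c i2 i3) (c i3 i2)) (Cadd (c i2 i4) (c i4 i2)) (c i3 i3)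
    (Cadd (c i3 i4) (c i4 i3)) (c i4 i4)).
  intro z. rewrite Hc. unfold Qv, sum4; simpl. ring.
Qed.

Lemma Q_tvec s p m t :
  Csub (Csub (Qv s (p4add p (tvec m t))) (Qv s p)) (Cmul (DQ s m p) t) = Cmul (qdiag s m) (Cmul t t).
Proof. destruct m; unfold Qv, DQ, dbl, p4add, tvec, qdiag; simpl; ring. Qed.

Lemma pderiv_Q s m p : pderiv (Qv s) m p (DQ s m p).
Proof.
  intros eps Heps. set (a := Cnorm (qdiag s m)).
  assert (Ha : 0 <= a) by apply Cn_ge0.
  exists (eps / (a + 1)). split. apply Rdiv_lt_0_compat; lra.
  intros t Ht. rewrite Q_tvec, !Cn_mul. fold a.
  pose proof (Cn_ge0 t).
  assert (Cnorm t * (a + 1) < eps).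
  { apply (Rmult_lt_compat_r (a+1)) in Ht; [|lra]. unfold Rdiv in Ht.
    rewrite Rmult_assoc, Rinv_l in Ht by lra. lra. }
  nra.
Qed.

Definition line (z v : C4) (t : R) : C4 := fun i => Cadd (z i) (Cmul (Cof t) (v i)).
Definition Bl (s : QS) (z v : C4) : CC := sum4 (fun m => Cmul (DQ s m z) (v m)).

Lemma Q_line s z v t : Qv s (line z v t) = cub (Qv s z) (Bl s z v) (Qv s v) C0 (Cof t).
Proof. unfold Qv, Bl, sum4, DQ, dbl, line, cub; simpl. ring. Qed.

Definition Fk (k l : I4) (s s' : QS) (z : C4) : CC :=
  Csub (Cmul (z k) (Qv s z)) (Cmul (z l) (Qv s' z)).

Lemma Fk_line k l s s' z v : exists f1 f2 f3, forall t,
  Fk k l s s' (line z v t) = cub (Fk k l s s' z) f1 f2 f3 (Cof t).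
Proof.
  eexists _, _, _. intro t. unfold Fk. rewrite !Q_line. unfold line.
  unfold cub. set (T := Cof t).
  instantiate (3 := Csub (Cadd (Cmul (z k) (Bl s z v)) (Cmul (v k) (Qv s z)))
                         (Cadd (Cmul (z l) (Bl s' z v)) (Cmul (v l) (Qv s' z)))).
  instantiate (2 := Csub (Cadd (Cmul (z k) (Qv s v)) (Cmul (v k) (Bl s z v)))
                         (Cadd (Cmul (z l) (Qv s' v)) (Cmul (v l) (Bl s' z v)))).
  instantiate (1 := Csub (Cmul (v k) (Qv s v)) (Cmul (v l) (Qv s' v))).
  ring.
Qed.

Lemma extend (F : C4 -> CC) (s : QS) :
  (exists v0, Qv s v0 <> C0) ->
  (forall z v, exists f1 f2 f3, forall t, F (line z v t) = cub (F z) f1 f2 f3 (Cof t)) ->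
  (forall y, Qv s y <> C0 -> F y = C0) -> forall z, F z = C0.
Proof.
  intros [v0 Hv] HF H z. destruct (HF z v0) as (f1&f2&f3&Hf).
  apply (ext_key (F z) f1 f2 f3 (Qv s z) (Bl s z v0) (Qv s v0) Hv).
  intros t Ht. rewrite <- Hf. apply H. rewrite Q_line. exact Ht.
Qed.


Lemma ilt12 : ilt i1 i2. Proof. unfold ilt; simpl; auto. Qed.
Lemma ilt13 : ilt i1 i3. Proof. unfold ilt; simpl; auto. Qed.
Lemma ilt14 : ilt i1 i4. Proof. unfold ilt; simpl; auto. Qed.
Lemma ilt23 : ilt i2 i3. Proof. unfold ilt; simpl; auto. Qed.
Lemma ilt24 : ilt i2 i4. Proof. unfold ilt; simpl; auto. Qed.
Lemma ilt34 : ilt i3 i4. Proof. unfold ilt; simpl; auto. Qed.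

Lemma at_point (eta : I4 -> I4 -> C4 -> CC) (D : I4 -> I4 -> I4 -> C4 -> CC) p :
  (forall m i j z, pderiv (eta i j) m z (D m i j z)) ->
  dform2 (fun m i j => D m i j p) i1 i2 i3 = C0 ->
  dform2 (fun m i j => D m i j p) i1 i2 i4 = C0 ->
  dform2 (fun m i j => D m i j p) i1 i3 i4 = p i2 ->
  dform2 (fun m i j => D m i j p) i2 i3 i4 = p i1 ->
  integrable2 eta -> (exists i j, ilt i j /\ eta i j p <> C0) ->
  Cmul (p i1) (eta i1 i2 p) = C0 /\ Cmul (p i2) (eta i1 i2 p) = C0 /\
  Csub (Cmul (p i1) (eta i1 i3 p)) (Cmul (p i2) (eta i2 i3 p)) = C0 /\
  Csub (Cmul (p i1) (eta i1 i4 p)) (Cmul (p i2) (eta i2 i4 p)) = C0.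
Proof.
  intros HD T123 T124 T134 T234 Hint Hnz.
  destruct (Hint p Hnz) as (V & Vo & Vp & w1 & w2 & _ & _ & Heq & D1 & D2 & HD1 & HD2 & HW).
  set (a := fun k => w1 k p). set (b := fun k => w2 k p).
  set (A := fun m k => D1 m k p). set (B := fun m k => D2 m k p).
  assert (Hprod : forall m i j, ilt i j -> D m i j p = Dp a b A B m i j).
  { intros m i j Hij.
    destruct (Vo p Vp) as [r [Hr Hrv]].
    apply (pderiv_unique (eta i j) m p).
    apply HD.
    apply (pderiv_local _ (fun q => Csub (Cmul (w1 i q) (w2 j q)) (Cmul (w1 j q) (w2 i q))) m p _ r Hr).
    - intros t Ht. apply Heq; auto. apply Hrv. rewrite norm4_tvec. exact Ht.
    - apply Heq; auto.
    - unfold Dp, a, b, A, B. apply pderiv_sub; apply pderiv_mul; auto. }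
  destruct (HW p Vp) as [W1 W2].
  assert (Heta : (fun i j => eta i j p) = (fun i j => eta i j p)) by reflexivity.
  assert (EW : forall X, wedge22 X (fun i j => eta i j p) = wedge22 X (wedge11 a b)).
  { intro X. unfold wedge22. rewrite !Heq by (auto using ilt12, ilt13, ilt14, ilt23, ilt24, ilt34). reflexivity. }
  rewrite EW in W1, W2.
  assert (ET : forall i j k, ilt i j -> ilt i k -> ilt j k ->
     dform2 (fun m i j => D m i j p) i j k = dform2 (Dp a b A B) i j k).
  { intros i j k Hij Hik Hjk. unfold dform2. rewrite !Hprod by auto. reflexivity. }
  rewrite ET in T123, T124, T134, T234 by (auto using ilt12, ilt13, ilt14, ilt23, ilt24, ilt34).
  pose proof (alg1 a b A B) as E1. pose proof (alg2 a b A B) as E2.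
  fold A in W1. fold B in W2.
  rewrite W1 in E1. rewrite W2 in E2. unfold T4 in E1, E2.
  rewrite T123, T124, T134, T234 in E1, E2.
  assert (X1 : Csub (Cmul (p i1) (a i1)) (Cmul (p i2) (a i2)) = C0).
  { transitivity (Copp (Copp C0)); [|ring]. rewrite <- E1. ring. }
  assert (X2 : Csub (Cmul (p i1) (b i1)) (Cmul (p i2) (b i2)) = C0).
  { transitivity (Copp (Copp C0)); [|ring]. rewrite <- E2. ring. }
  rewrite !Heq by (auto using ilt12, ilt13, ilt14, ilt23, ilt24, ilt34).
  fold a b. unfold wedge11.
  repeat split.
  - transitivity (Csub (Cmul (b i2) (Csub (Cmul (p i1) (a i1)) (Cmul (p i2) (a i2))))
                       (Cmul (a i2) (Csub (Cmul (p i1) (b i1)) (Cmul (p i2) (b i2))))). ring.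
    rewrite X1, X2. ring.
  - transitivity (Csub (Cmul (b i1) (Csub (Cmul (p i1) (a i1)) (Cmul (p i2) (a i2))))
                       (Cmul (a i1) (Csub (Cmul (p i1) (b i1)) (Cmul (p i2) (b i2))))). ring.
    rewrite X1, X2. ring.
  - transitivity (Csub (Cmul (b i3) (Csub (Cmul (p i1) (a i1)) (Cmul (p i2) (a i2))))
                       (Cmul (a i3) (Csub (Cmul (p i1) (b i1)) (Cmul (p i2) (b i2))))). ring.
    rewrite X1, X2. ring.
  - transitivity (Csub (Cmul (b i4) (Csub (Cmul (p i1) (a i1)) (Cmul (p i2) (a i2))))
                       (Cmul (a i4) (Csub (Cmul (p i1) (b i1)) (Cmul (p i2) (b i2))))). ring.
    rewrite X1, X2. ring.
Qed.


Definition pt (a b c d : R) : C4 := fun k => match k with i1 => Cof a | i2 => Cof b | i3 => Cof c | i4 => Cof d end.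
Definition zQ : QS := mkQS C0 C0 C0 C0 C0 C0 C0 C0 C0 C0.
Lemma Qv_zero y : Qv zQ y = C0.
Proof. unfold Qv, zQ; cbn [q11 q12 q13 q14 q22 q23 q24 q33 q34 q44]; ring. Qed.

Lemma eta_extend (eta : I4 -> I4 -> C4 -> CC) (F : C4 -> CC) :
  (forall i j, ilt i j -> exists s, forall z, eta i j z = Qv s z) ->
  (exists i j, ilt i j /\ exists v, eta i j v <> C0) ->
  (forall z v, exists f1 f2 f3, forall t, F (line z v t) = cub (F z) f1 f2 f3 (Cof t)) ->
  (forall y, (exists i j, ilt i j /\ eta i j y <> C0) -> F y = C0) -> forall z, F z = C0.
Proof.
  intros Hs (i & j & Hij & v & Hv) HF H.
  destruct (Hs i j Hij) as [s Es].
  apply (extend F s). exists v. rewrite <- Es. exact Hv. exact HF.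
  intros y Hy. apply H. exists i, j. split. exact Hij. rewrite Es. exact Hy.
Qed.


Theorem mainTheorem18 (eta : I4 -> I4 -> C4 -> CC) :
  (forall i j, ilt i j -> hom_quad (eta i j)) ->
  integrable2 eta ->
  (exists D : I4 -> I4 -> I4 -> C4 -> CC,
     (forall m i j z, pderiv (eta i j) m z (D m i j z)) /\
     (forall z,
        dform2 (fun m i j => D m i j z) i1 i2 i3 = C0 /\
        dform2 (fun m i j => D m i j z) i1 i2 i4 = C0 /\
        dform2 (fun m i j => D m i j z) i1 i3 i4 = z i2 /\
        dform2 (fun m i j => D m i j z) i2 i3 i4 = z i1)) ->
  exists (a3 a4 b3 b4 a q33 q34 q44 : CC),
    forall z,
      let A := Cadd (Cmul a3 (z i3)) (Cmul a4 (z i4)) in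
      let B := Cadd (Cmul b3 (z i3)) (Cmul b4 (z i4)) in
      let q := Cadd (Cadd (Cmul q33 (Cmul (z i3) (z i3)))
                          (Cmul q34 (Cmul (z i3) (z i4))))
                    (Cmul q44 (Cmul (z i4) (z i4))) in
      eta i1 i2 z = C0 /\
      eta i1 i3 z = Cmul (z i2) A /\
      eta i1 i4 z = Cmul (z i2) B /\
      eta i2 i3 z = Cmul (z i1) A /\
      eta i2 i4 z = Cmul (z i1) B /\
      eta i3 i4 z = Cadd (Cmul a (Cmul (z i1) (z i2))) q.
Proof.
  intros Hq Hint [D [HD HT]].
  assert (Hs : forall i j, ilt i j -> exists s, forall z, eta i j z = Qv s z)
    by (intros; apply hq_QS; auto).
  destruct (Hs _ _ ilt12) as [s12 E12]. destruct (Hs _ _ ilt13) as [s13 E13].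
  destruct (Hs _ _ ilt14) as [s14 E14]. destruct (Hs _ _ ilt23) as [s23 E23].
  destruct (Hs _ _ ilt24) as [s24 E24]. destruct (Hs _ _ ilt34) as [s34 E34].
  assert (Dq : forall m i j z s, ilt i j -> (forall z, eta i j z = Qv s z) -> D m i j z = DQ s m z).
  { intros m i j z s Hij Es. apply (pderiv_unique (eta i j) m z). apply HD.
    assert (eta i j = Qv s) as -> by (apply functional_extensionality; auto). apply pderiv_Q. }
  assert (NZ : exists i j, ilt i j /\ exists v, eta i j v <> C0).
  { apply NNPP; intro N.
    assert (Z : forall i j v, ilt i j -> eta i j v = C0).
    { intros i j v Hij. apply NNPP; intro Hn. apply N. exists i, j. split; auto. exists v; auto. }
    assert (Dz : forall m i j z, ilt i j -> D m i j z = C0).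
    { intros m i j z Hij. apply (pderiv_unique (eta i j) m z); auto.
      intros eps He. exists 1. split. lra. intros t _. rewrite !Z by auto.
      replace (Csub (Csub C0 C0) (Cmul C0 t)) with C0 by ring. rewrite Cn_0.
      pose proof (Cn_ge0 t). nra. }
    destruct (HT (pt 0 1 0 0)) as (_&_&H3&_). unfold dform2 in H3.
    rewrite !Dz in H3 by (auto using ilt12, ilt13, ilt14, ilt23, ilt24, ilt34).
    unfold pt, Cof, C0, Cadd, Csub, Copp in H3. simpl in H3. injection H3 as H3 _. lra. }
  assert (AP : forall y, (exists i j, ilt i j /\ eta i j y <> C0) ->
    Cmul (y i1) (eta i1 i2 y) = C0 /\ Cmul (y i2) (eta i1 i2 y) = C0 /\
    Csub (Cmul (y i1) (eta i1 i3 y)) (Cmul (y i2) (eta i2 i3 y)) = C0 /\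
    Csub (Cmul (y i1) (eta i1 i4 y)) (Cmul (y i2) (eta i2 i4 y)) = C0).
  { intros y Hy. destruct (HT y) as (T1&T2&T3&T4). eapply at_point; eauto. }
  assert (G1 : forall z, Fk i1 i2 s12 zQ z = C0).
  { apply (eta_extend eta); auto. apply Fk_line. intros y Hy.
    destruct (AP y Hy) as (A1&_&_&_). unfold Fk. rewrite <- E12, A1, Qv_zero. ring. }
  assert (G3 : forall z, Fk i1 i2 s13 s23 z = C0).
  { apply (eta_extend eta); auto. apply Fk_line. intros y Hy.
    destruct (AP y Hy) as (_&_&A3&_). unfold Fk. rewrite <- E13, <- E23. exact A3. }
  assert (G4 : forall z, Fk i1 i2 s14 s24 z = C0).
  { apply (eta_extend eta); auto. apply Fk_line. intros y Hy.
    destruct (AP y Hy) as (_&_&_&A4). unfold Fk. rewrite <- E14, <- E24. exact A4. }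
  assert (K123 : forall z, Cadd (Csub (DQ s23 i1 z) (DQ s13 i2 z)) (DQ s12 i3 z) = C0).
  { intro z. destruct (HT z) as (H&_). unfold dform2 in H.
    rewrite (Dq i1 i2 i3 z s23 ilt23 E23), (Dq i2 i1 i3 z s13 ilt13 E13), (Dq i3 i1 i2 z s12 ilt12 E12) in H. exact H. }
  assert (K124 : forall z, Cadd (Csub (DQ s24 i1 z) (DQ s14 i2 z)) (DQ s12 i4 z) = C0).
  { intro z. destruct (HT z) as (_&H&_). unfold dform2 in H.
    rewrite (Dq i1 i2 i4 z s24 ilt24 E24), (Dq i2 i1 i4 z s14 ilt14 E14), (Dq i4 i1 i2 z s12 ilt12 E12) in H. exact H. }
  assert (K134 : forall z, Cadd (Csub (DQ s34 i1 z) (DQ s14 i3 z)) (DQ s13 i4 z) = z i2).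
  { intro z. destruct (HT z) as (_&_&H&_). unfold dform2 in H.
    rewrite (Dq i1 i3 i4 z s34 ilt34 E34), (Dq i3 i1 i4 z s14 ilt14 E14), (Dq i4 i1 i3 z s13 ilt13 E13) in H. exact H. }
  assert (K234 : forall z, Cadd (Csub (DQ s34 i2 z) (DQ s24 i3 z)) (DQ s23 i4 z) = z i1).
  { intro z. destruct (HT z) as (_&_&_&H). unfold dform2 in H.
    rewrite (Dq i2 i3 i4 z s34 ilt34 E34), (Dq i3 i2 i4 z s24 ilt24 E24), (Dq i4 i2 i3 z s23 ilt23 E23) in H. exact H. }
  clear AP NZ Dq Hs HT HD Hint Hq.
  exists (q23 s13), (q24 s13), (q23 s14), (q24 s14), (q12 s34), (q33 s34), (q34 s34), (q44 s34).
  intro z. cbv zeta. rewrite E12, E13, E14, E23, E24, E34. clear E12 E13 E14 E23 E24 E34.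
destruct s12 as [[r12_11 i12_11] [r12_12 i12_12] [r12_13 i12_13] [r12_14 i12_14] [r12_22 i12_22] [r12_23 i12_23] [r12_24 i12_24] [r12_33 i12_33] [r12_34 i12_34] [r12_44 i12_44]].
destruct s13 as [[r13_11 i13_11] [r13_12 i13_12] [r13_13 i13_13] [r13_14 i13_14] [r13_22 i13_22] [r13_23 i13_23] [r13_24 i13_24] [r13_33 i13_33] [r13_34 i13_34] [r13_44 i13_44]].
destruct s14 as [[r14_11 i14_11] [r14_12 i14_12] [r14_13 i14_13] [r14_14 i14_14] [r14_22 i14_22] [r14_23 i14_23] [r14_24 i14_24] [r14_33 i14_33] [r14_34 i14_34] [r14_44 i14_44]].
destruct s23 as [[r23_11 i23_11] [r23_12 i23_12] [r23_13 i23_13] [r23_14 i23_14] [r23_22 i23_22] [r23_23 i23_23] [r23_24 i23_24] [r23_33 i23_33] [r23_34 i23_34] [r23_44 i23_44]].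
destruct s24 as [[r24_11 i24_11] [r24_12 i24_12] [r24_13 i24_13] [r24_14 i24_14] [r24_22 i24_22] [r24_23 i24_23] [r24_24 i24_24] [r24_33 i24_33] [r24_34 i24_34] [r24_44 i24_44]].
destruct s34 as [[r34_11 i34_11] [r34_12 i34_12] [r34_13 i34_13] [r34_14 i34_14] [r34_22 i34_22] [r34_23 i34_23] [r34_24 i34_24] [r34_33 i34_33] [r34_34 i34_34] [r34_44 i34_44]].
assert (S1 : r12_11 = 0 /\ i12_11 = 0 /\ r12_12 = 0 /\ i12_12 = 0 /\ r12_13 = 0 /\ i12_13 = 0 /\ r12_14 = 0 /\ i12_14 = 0 /\ r12_22 = 0 /\ i12_22 = 0 /\ r12_23 = 0 /\ i12_23 = 0 /\ r12_24 = 0 /\ i12_24 = 0 /\ r12_33 = 0 /\ i12_33 = 0 /\ r12_34 = 0 /\ i12_34 = 0 /\ r12_44 = 0 /\ i12_44 = 0).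
  { pose proof (G1 (pt (1) (0) (0) (0))) as E1; pose proof (f_equal fst E1) as E1a; pose proof (f_equal snd E1) as E1b; clear E1; cbn [fst snd Fk Qv DQ dbl pt Cof Cmul Csub Cadd Copp C0 q11 q12 q13 q14 q22 q23 q24 q33 q34 q44 zQ] in E1a, E1b.
    pose proof (G1 (pt (1) (1) (0) (0))) as E2; pose proof (f_equal fst E2) as E2a; pose proof (f_equal snd E2) as E2b; clear E2; cbn [fst snd Fk Qv DQ dbl pt Cof Cmul Csub Cadd Copp C0 q11 q12 q13 q14 q22 q23 q24 q33 q34 q44 zQ] in E2a, E2b.
    pose proof (G1 (pt (1) (0) (1) (0))) as E3; pose proof (f_equal fst E3) as E3a; pose proof (f_equal snd E3) as E3b; clear E3; cbn [fst snd Fk Qv DQ dbl pt Cof Cmul Csub Cadd Copp C0 q11 q12 q13 q14 q22 q23 q24 q33 q34 q44 zQ] in E3a, E3b.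
    pose proof (G1 (pt (1) (0) (0) (1))) as E4; pose proof (f_equal fst E4) as E4a; pose proof (f_equal snd E4) as E4b; clear E4; cbn [fst snd Fk Qv DQ dbl pt Cof Cmul Csub Cadd Copp C0 q11 q12 q13 q14 q22 q23 q24 q33 q34 q44 zQ] in E4a, E4b.
    pose proof (G1 (pt (1) (-1) (0) (0))) as E5; pose proof (f_equal fst E5) as E5a; pose proof (f_equal snd E5) as E5b; clear E5; cbn [fst snd Fk Qv DQ dbl pt Cof Cmul Csub Cadd Copp C0 q11 q12 q13 q14 q22 q23 q24 q33 q34 q44 zQ] in E5a, E5b.
    pose proof (G1 (pt (1) (0) (-1) (0))) as E6; pose proof (f_equal fst E6) as E6a; pose proof (f_equal snd E6) as E6b; clear E6; cbn [fst snd Fk Qv DQ dbl pt Cof Cmul Csub Cadd Copp C0 q11 q12 q13 q14 q22 q23 q24 q33 q34 q44 zQ] in E6a, E6b.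
    pose proof (G1 (pt (1) (0) (0) (-1))) as E7; pose proof (f_equal fst E7) as E7a; pose proof (f_equal snd E7) as E7b; clear E7; cbn [fst snd Fk Qv DQ dbl pt Cof Cmul Csub Cadd Copp C0 q11 q12 q13 q14 q22 q23 q24 q33 q34 q44 zQ] in E7a, E7b.
    pose proof (G1 (pt (1) (1) (1) (0))) as E8; pose proof (f_equal fst E8) as E8a; pose proof (f_equal snd E8) as E8b; clear E8; cbn [fst snd Fk Qv DQ dbl pt Cof Cmul Csub Cadd Copp C0 q11 q12 q13 q14 q22 q23 q24 q33 q34 q44 zQ] in E8a, E8b.
    pose proof (G1 (pt (1) (1) (0) (1))) as E9; pose proof (f_equal fst E9) as E9a; pose proof (f_equal snd E9) as E9b; clear E9; cbn [fst snd Fk Qv DQ dbl pt Cof Cmul Csub Cadd Copp C0 q11 q12 q13 q14 q22 q23 q24 q33 q34 q44 zQ] in E9a, E9b.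
    pose proof (G1 (pt (1) (0) (1) (1))) as E10; pose proof (f_equal fst E10) as E10a; pose proof (f_equal snd E10) as E10b; clear E10; cbn [fst snd Fk Qv DQ dbl pt Cof Cmul Csub Cadd Copp C0 q11 q12 q13 q14 q22 q23 q24 q33 q34 q44 zQ] in E10a, E10b.
    repeat split; lra. }
  destruct S1 as (?&?&?&?&?&?&?&?&?&?&?&?&?&?&?&?&?&?&?&?).
  subst.

assert (S13 : r13_11 = 0 /\ i13_11 = 0 /\ r13_12 = 0 /\ i13_12 = 0 /\ r13_13 = 0 /\ i13_13 = 0 /\ r13_14 = 0 /\ i13_14 = 0 /\ r13_22 = 0 /\ i13_22 = 0 /\ r13_33 = 0 /\ i13_33 = 0 /\ r13_34 = 0 /\ i13_34 = 0 /\ r13_44 = 0 /\ i13_44 = 0 /\ r23_11 = 0 /\ i23_11 = 0 /\ r23_12 = 0 /\ i23_12 = 0 /\ r23_22 = 0 /\ i23_22 = 0 /\ r23_23 = 0 /\ i23_23 = 0 /\ r23_24 = 0 /\ i23_24 = 0 /\ r23_33 = 0 /\ i23_33 = 0 /\ r23_34 = 0 /\ i23_34 = 0 /\ r23_44 = 0 /\ i23_44 = 0 /\ r23_13 = r13_23 /\ i23_13 = i13_23 /\ r23_14 = r13_24 /\ i23_14 = i13_24).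
  { pose proof (G3 (pt (1) (0) (0) (0))) as E11; pose proof (f_equal fst E11) as E11a; pose proof (f_equal snd E11) as E11b; clear E11; cbn [fst snd Fk Qv DQ dbl pt Cof Cmul Csub Cadd Copp C0 q11 q12 q13 q14 q22 q23 q24 q33 q34 q44 zQ] in E11a, E11b.
    pose proof (G3 (pt (1) (0) (1) (0))) as E12; pose proof (f_equal fst E12) as E12a; pose proof (f_equal snd E12) as E12b; clear E12; cbn [fst snd Fk Qv DQ dbl pt Cof Cmul Csub Cadd Copp C0 q11 q12 q13 q14 q22 q23 q24 q33 q34 q44 zQ] in E12a, E12b.
    pose proof (G3 (pt (1) (0) (-1) (0))) as E13; pose proof (f_equal fst E13) as E13a; pose proof (f_equal snd E13) as E13b; clear E13; cbn [fst snd Fk Qv DQ dbl pt Cof Cmul Csub Cadd Copp C0 q11 q12 q13 q14 q22 q23 q24 q33 q34 q44 zQ] in E13a, E13b.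
    pose proof (G3 (pt (1) (0) (0) (1))) as E14; pose proof (f_equal fst E14) as E14a; pose proof (f_equal snd E14) as E14b; clear E14; cbn [fst snd Fk Qv DQ dbl pt Cof Cmul Csub Cadd Copp C0 q11 q12 q13 q14 q22 q23 q24 q33 q34 q44 zQ] in E14a, E14b.
    pose proof (G3 (pt (1) (0) (0) (-1))) as E15; pose proof (f_equal fst E15) as E15a; pose proof (f_equal snd E15) as E15b; clear E15; cbn [fst snd Fk Qv DQ dbl pt Cof Cmul Csub Cadd Copp C0 q11 q12 q13 q14 q22 q23 q24 q33 q34 q44 zQ] in E15a, E15b.
    pose proof (G3 (pt (1) (0) (1) (1))) as E16; pose proof (f_equal fst E16) as E16a; pose proof (f_equal snd E16) as E16b; clear E16; cbn [fst snd Fk Qv DQ dbl pt Cof Cmul Csub Cadd Copp C0 q11 q12 q13 q14 q22 q23 q24 q33 q34 q44 zQ] in E16a, E16b.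
    pose proof (G3 (pt (0) (1) (0) (0))) as E17; pose proof (f_equal fst E17) as E17a; pose proof (f_equal snd E17) as E17b; clear E17; cbn [fst snd Fk Qv DQ dbl pt Cof Cmul Csub Cadd Copp C0 q11 q12 q13 q14 q22 q23 q24 q33 q34 q44 zQ] in E17a, E17b.
    pose proof (G3 (pt (0) (1) (1) (0))) as E18; pose proof (f_equal fst E18) as E18a; pose proof (f_equal snd E18) as E18b; clear E18; cbn [fst snd Fk Qv DQ dbl pt Cof Cmul Csub Cadd Copp C0 q11 q12 q13 q14 q22 q23 q24 q33 q34 q44 zQ] in E18a, E18b.
    pose proof (G3 (pt (0) (1) (-1) (0))) as E19; pose proof (f_equal fst E19) as E19a; pose proof (f_equal snd E19) as E19b; clear E19; cbn [fst snd Fk Qv DQ dbl pt Cof Cmul Csub Cadd Copp C0 q11 q12 q13 q14 q22 q23 q24 q33 q34 q44 zQ] in E19a, E19b.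
    pose proof (G3 (pt (0) (1) (0) (1))) as E20; pose proof (f_equal fst E20) as E20a; pose proof (f_equal snd E20) as E20b; clear E20; cbn [fst snd Fk Qv DQ dbl pt Cof Cmul Csub Cadd Copp C0 q11 q12 q13 q14 q22 q23 q24 q33 q34 q44 zQ] in E20a, E20b.
    pose proof (G3 (pt (0) (1) (0) (-1))) as E21; pose proof (f_equal fst E21) as E21a; pose proof (f_equal snd E21) as E21b; clear E21; cbn [fst snd Fk Qv DQ dbl pt Cof Cmul Csub Cadd Copp C0 q11 q12 q13 q14 q22 q23 q24 q33 q34 q44 zQ] in E21a, E21b.
    pose proof (G3 (pt (0) (1) (1) (1))) as E22; pose proof (f_equal fst E22) as E22a; pose proof (f_equal snd E22) as E22b; clear E22; cbn [fst snd Fk Qv DQ dbl pt Cof Cmul Csub Cadd Copp C0 q11 q12 q13 q14 q22 q23 q24 q33 q34 q44 zQ] in E22a, E22b.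
    pose proof (G3 (pt (1) (1) (0) (0))) as E23; pose proof (f_equal fst E23) as E23a; pose proof (f_equal snd E23) as E23b; clear E23; cbn [fst snd Fk Qv DQ dbl pt Cof Cmul Csub Cadd Copp C0 q11 q12 q13 q14 q22 q23 q24 q33 q34 q44 zQ] in E23a, E23b.
    pose proof (G3 (pt (1) (1) (1) (0))) as E24; pose proof (f_equal fst E24) as E24a; pose proof (f_equal snd E24) as E24b; clear E24; cbn [fst snd Fk Qv DQ dbl pt Cof Cmul Csub Cadd Copp C0 q11 q12 q13 q14 q22 q23 q24 q33 q34 q44 zQ] in E24a, E24b.
    pose proof (G3 (pt (1) (1) (0) (1))) as E25; pose proof (f_equal fst E25) as E25a; pose proof (f_equal snd E25) as E25b; clear E25; cbn [fst snd Fk Qv DQ dbl pt Cof Cmul Csub Cadd Copp C0 q11 q12 q13 q14 q22 q23 q24 q33 q34 q44 zQ] in E25a, E25b.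
    pose proof (G3 (pt (1) (2) (0) (0))) as E26; pose proof (f_equal fst E26) as E26a; pose proof (f_equal snd E26) as E26b; clear E26; cbn [fst snd Fk Qv DQ dbl pt Cof Cmul Csub Cadd Copp C0 q11 q12 q13 q14 q22 q23 q24 q33 q34 q44 zQ] in E26a, E26b.
    pose proof (G3 (pt (2) (1) (0) (0))) as E27; pose proof (f_equal fst E27) as E27a; pose proof (f_equal snd E27) as E27b; clear E27; cbn [fst snd Fk Qv DQ dbl pt Cof Cmul Csub Cadd Copp C0 q11 q12 q13 q14 q22 q23 q24 q33 q34 q44 zQ] in E27a, E27b.
    pose proof (K123 (pt (1) (0) (0) (0))) as E28; pose proof (f_equal fst E28) as E28a; pose proof (f_equal snd E28) as E28b; clear E28; cbn [fst snd Fk Qv DQ dbl pt Cof Cmul Csub Cadd Copp C0 q11 q12 q13 q14 q22 q23 q24 q33 q34 q44 zQ] in E28a, E28b.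
    pose proof (K123 (pt (0) (1) (0) (0))) as E29; pose proof (f_equal fst E29) as E29a; pose proof (f_equal snd E29) as E29b; clear E29; cbn [fst snd Fk Qv DQ dbl pt Cof Cmul Csub Cadd Copp C0 q11 q12 q13 q14 q22 q23 q24 q33 q34 q44 zQ] in E29a, E29b.
    pose proof (K123 (pt (0) (0) (1) (0))) as E30; pose proof (f_equal fst E30) as E30a; pose proof (f_equal snd E30) as E30b; clear E30; cbn [fst snd Fk Qv DQ dbl pt Cof Cmul Csub Cadd Copp C0 q11 q12 q13 q14 q22 q23 q24 q33 q34 q44 zQ] in E30a, E30b.
    pose proof (K123 (pt (0) (0) (0) (1))) as E31; pose proof (f_equal fst E31) as E31a; pose proof (f_equal snd E31) as E31b; clear E31; cbn [fst snd Fk Qv DQ dbl pt Cof Cmul Csub Cadd Copp C0 q11 q12 q13 q14 q22 q23 q24 q33 q34 q44 zQ] in E31a, E31b.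
    repeat split; lra. }
  destruct S13 as (?&?&?&?&?&?&?&?&?&?&?&?&?&?&?&?&?&?&?&?&?&?&?&?&?&?&?&?&?&?&?&?&?&?&?&?).
  subst.

assert (S14 : r14_11 = 0 /\ i14_11 = 0 /\ r14_12 = 0 /\ i14_12 = 0 /\ r14_13 = 0 /\ i14_13 = 0 /\ r14_14 = 0 /\ i14_14 = 0 /\ r14_22 = 0 /\ i14_22 = 0 /\ r14_33 = 0 /\ i14_33 = 0 /\ r14_34 = 0 /\ i14_34 = 0 /\ r14_44 = 0 /\ i14_44 = 0 /\ r24_11 = 0 /\ i24_11 = 0 /\ r24_12 = 0 /\ i24_12 = 0 /\ r24_22 = 0 /\ i24_22 = 0 /\ r24_23 = 0 /\ i24_23 = 0 /\ r24_24 = 0 /\ i24_24 = 0 /\ r24_33 = 0 /\ i24_33 = 0 /\ r24_34 = 0 /\ i24_34 = 0 /\ r24_44 = 0 /\ i24_44 = 0 /\ r24_13 = r14_23 /\ i24_13 = i14_23 /\ r24_14 = r14_24 /\ i24_14 = i14_24).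
  { pose proof (G4 (pt (1) (0) (0) (0))) as E32; pose proof (f_equal fst E32) as E32a; pose proof (f_equal snd E32) as E32b; clear E32; cbn [fst snd Fk Qv DQ dbl pt Cof Cmul Csub Cadd Copp C0 q11 q12 q13 q14 q22 q23 q24 q33 q34 q44 zQ] in E32a, E32b.
    pose proof (G4 (pt (1) (0) (1) (0))) as E33; pose proof (f_equal fst E33) as E33a; pose proof (f_equal snd E33) as E33b; clear E33; cbn [fst snd Fk Qv DQ dbl pt Cof Cmul Csub Cadd Copp C0 q11 q12 q13 q14 q22 q23 q24 q33 q34 q44 zQ] in E33a, E33b.
    pose proof (G4 (pt (1) (0) (-1) (0))) as E34; pose proof (f_equal fst E34) as E34a; pose proof (f_equal snd E34) as E34b; clear E34; cbn [fst snd Fk Qv DQ dbl pt Cof Cmul Csub Cadd Copp C0 q11 q12 q13 q14 q22 q23 q24 q33 q34 q44 zQ] in E34a, E34b.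
    pose proof (G4 (pt (1) (0) (0) (1))) as E35; pose proof (f_equal fst E35) as E35a; pose proof (f_equal snd E35) as E35b; clear E35; cbn [fst snd Fk Qv DQ dbl pt Cof Cmul Csub Cadd Copp C0 q11 q12 q13 q14 q22 q23 q24 q33 q34 q44 zQ] in E35a, E35b.
    pose proof (G4 (pt (1) (0) (0) (-1))) as E36; pose proof (f_equal fst E36) as E36a; pose proof (f_equal snd E36) as E36b; clear E36; cbn [fst snd Fk Qv DQ dbl pt Cof Cmul Csub Cadd Copp C0 q11 q12 q13 q14 q22 q23 q24 q33 q34 q44 zQ] in E36a, E36b.
    pose proof (G4 (pt (1) (0) (1) (1))) as E37; pose proof (f_equal fst E37) as E37a; pose proof (f_equal snd E37) as E37b; clear E37; cbn [fst snd Fk Qv DQ dbl pt Cof Cmul Csub Cadd Copp C0 q11 q12 q13 q14 q22 q23 q24 q33 q34 q44 zQ] in E37a, E37b.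
    pose proof (G4 (pt (0) (1) (0) (0))) as E38; pose proof (f_equal fst E38) as E38a; pose proof (f_equal snd E38) as E38b; clear E38; cbn [fst snd Fk Qv DQ dbl pt Cof Cmul Csub Cadd Copp C0 q11 q12 q13 q14 q22 q23 q24 q33 q34 q44 zQ] in E38a, E38b.
    pose proof (G4 (pt (0) (1) (1) (0))) as E39; pose proof (f_equal fst E39) as E39a; pose proof (f_equal snd E39) as E39b; clear E39; cbn [fst snd Fk Qv DQ dbl pt Cof Cmul Csub Cadd Copp C0 q11 q12 q13 q14 q22 q23 q24 q33 q34 q44 zQ] in E39a, E39b.
    pose proof (G4 (pt (0) (1) (-1) (0))) as E40; pose proof (f_equal fst E40) as E40a; pose proof (f_equal snd E40) as E40b; clear E40; cbn [fst snd Fk Qv DQ dbl pt Cof Cmul Csub Cadd Copp C0 q11 q12 q13 q14 q22 q23 q24 q33 q34 q44 zQ] in E40a, E40b.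
    pose proof (G4 (pt (0) (1) (0) (1))) as E41; pose proof (f_equal fst E41) as E41a; pose proof (f_equal snd E41) as E41b; clear E41; cbn [fst snd Fk Qv DQ dbl pt Cof Cmul Csub Cadd Copp C0 q11 q12 q13 q14 q22 q23 q24 q33 q34 q44 zQ] in E41a, E41b.
    pose proof (G4 (pt (0) (1) (0) (-1))) as E42; pose proof (f_equal fst E42) as E42a; pose proof (f_equal snd E42) as E42b; clear E42; cbn [fst snd Fk Qv DQ dbl pt Cof Cmul Csub Cadd Copp C0 q11 q12 q13 q14 q22 q23 q24 q33 q34 q44 zQ] in E42a, E42b.
    pose proof (G4 (pt (0) (1) (1) (1))) as E43; pose proof (f_equal fst E43) as E43a; pose proof (f_equal snd E43) as E43b; clear E43; cbn [fst snd Fk Qv DQ dbl pt Cof Cmul Csub Cadd Copp C0 q11 q12 q13 q14 q22 q23 q24 q33 q34 q44 zQ] in E43a, E43b.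
    pose proof (G4 (pt (1) (1) (0) (0))) as E44; pose proof (f_equal fst E44) as E44a; pose proof (f_equal snd E44) as E44b; clear E44; cbn [fst snd Fk Qv DQ dbl pt Cof Cmul Csub Cadd Copp C0 q11 q12 q13 q14 q22 q23 q24 q33 q34 q44 zQ] in E44a, E44b.
    pose proof (G4 (pt (1) (1) (1) (0))) as E45; pose proof (f_equal fst E45) as E45a; pose proof (f_equal snd E45) as E45b; clear E45; cbn [fst snd Fk Qv DQ dbl pt Cof Cmul Csub Cadd Copp C0 q11 q12 q13 q14 q22 q23 q24 q33 q34 q44 zQ] in E45a, E45b.
    pose proof (G4 (pt (1) (1) (0) (1))) as E46; pose proof (f_equal fst E46) as E46a; pose proof (f_equal snd E46) as E46b; clear E46; cbn [fst snd Fk Qv DQ dbl pt Cof Cmul Csub Cadd Copp C0 q11 q12 q13 q14 q22 q23 q24 q33 q34 q44 zQ] in E46a, E46b.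
    pose proof (G4 (pt (1) (2) (0) (0))) as E47; pose proof (f_equal fst E47) as E47a; pose proof (f_equal snd E47) as E47b; clear E47; cbn [fst snd Fk Qv DQ dbl pt Cof Cmul Csub Cadd Copp C0 q11 q12 q13 q14 q22 q23 q24 q33 q34 q44 zQ] in E47a, E47b.
    pose proof (G4 (pt (2) (1) (0) (0))) as E48; pose proof (f_equal fst E48) as E48a; pose proof (f_equal snd E48) as E48b; clear E48; cbn [fst snd Fk Qv DQ dbl pt Cof Cmul Csub Cadd Copp C0 q11 q12 q13 q14 q22 q23 q24 q33 q34 q44 zQ] in E48a, E48b.
    pose proof (K124 (pt (1) (0) (0) (0))) as E49; pose proof (f_equal fst E49) as E49a; pose proof (f_equal snd E49) as E49b; clear E49; cbn [fst snd Fk Qv DQ dbl pt Cof Cmul Csub Cadd Copp C0 q11 q12 q13 q14 q22 q23 q24 q33 q34 q44 zQ] in E49a, E49b.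
    pose proof (K124 (pt (0) (1) (0) (0))) as E50; pose proof (f_equal fst E50) as E50a; pose proof (f_equal snd E50) as E50b; clear E50; cbn [fst snd Fk Qv DQ dbl pt Cof Cmul Csub Cadd Copp C0 q11 q12 q13 q14 q22 q23 q24 q33 q34 q44 zQ] in E50a, E50b.
    pose proof (K124 (pt (0) (0) (1) (0))) as E51; pose proof (f_equal fst E51) as E51a; pose proof (f_equal snd E51) as E51b; clear E51; cbn [fst snd Fk Qv DQ dbl pt Cof Cmul Csub Cadd Copp C0 q11 q12 q13 q14 q22 q23 q24 q33 q34 q44 zQ] in E51a, E51b.
    pose proof (K124 (pt (0) (0) (0) (1))) as E52; pose proof (f_equal fst E52) as E52a; pose proof (f_equal snd E52) as E52b; clear E52; cbn [fst snd Fk Qv DQ dbl pt Cof Cmul Csub Cadd Copp C0 q11 q12 q13 q14 q22 q23 q24 q33 q34 q44 zQ] in E52a, E52b.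
    repeat split; lra. }
  destruct S14 as (?&?&?&?&?&?&?&?&?&?&?&?&?&?&?&?&?&?&?&?&?&?&?&?&?&?&?&?&?&?&?&?&?&?&?&?).
  subst.

assert (S34 : r34_11 = 0 /\ i34_11 = 0 /\ r34_13 = 0 /\ i34_13 = 0 /\ r34_14 = 0 /\ i34_14 = 0 /\ r34_22 = 0 /\ i34_22 = 0 /\ r34_23 = 0 /\ i34_23 = 0 /\ r34_24 = 0 /\ i34_24 = 0).
  { pose proof (K134 (pt (1) (0) (0) (0))) as E53; pose proof (f_equal fst E53) as E53a; pose proof (f_equal snd E53) as E53b; clear E53; cbn [fst snd Fk Qv DQ dbl pt Cof Cmul Csub Cadd Copp C0 q11 q12 q13 q14 q22 q23 q24 q33 q34 q44 zQ] in E53a, E53b.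
    pose proof (K134 (pt (0) (1) (0) (0))) as E54; pose proof (f_equal fst E54) as E54a; pose proof (f_equal snd E54) as E54b; clear E54; cbn [fst snd Fk Qv DQ dbl pt Cof Cmul Csub Cadd Copp C0 q11 q12 q13 q14 q22 q23 q24 q33 q34 q44 zQ] in E54a, E54b.
    pose proof (K134 (pt (0) (0) (1) (0))) as E55; pose proof (f_equal fst E55) as E55a; pose proof (f_equal snd E55) as E55b; clear E55; cbn [fst snd Fk Qv DQ dbl pt Cof Cmul Csub Cadd Copp C0 q11 q12 q13 q14 q22 q23 q24 q33 q34 q44 zQ] in E55a, E55b.
    pose proof (K134 (pt (0) (0) (0) (1))) as E56; pose proof (f_equal fst E56) as E56a; pose proof (f_equal snd E56) as E56b; clear E56; cbn [fst snd Fk Qv DQ dbl pt Cof Cmul Csub Cadd Copp C0 q11 q12 q13 q14 q22 q23 q24 q33 q34 q44 zQ] in E56a, E56b.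
    pose proof (K234 (pt (1) (0) (0) (0))) as E57; pose proof (f_equal fst E57) as E57a; pose proof (f_equal snd E57) as E57b; clear E57; cbn [fst snd Fk Qv DQ dbl pt Cof Cmul Csub Cadd Copp C0 q11 q12 q13 q14 q22 q23 q24 q33 q34 q44 zQ] in E57a, E57b.
    pose proof (K234 (pt (0) (1) (0) (0))) as E58; pose proof (f_equal fst E58) as E58a; pose proof (f_equal snd E58) as E58b; clear E58; cbn [fst snd Fk Qv DQ dbl pt Cof Cmul Csub Cadd Copp C0 q11 q12 q13 q14 q22 q23 q24 q33 q34 q44 zQ] in E58a, E58b.
    pose proof (K234 (pt (0) (0) (1) (0))) as E59; pose proof (f_equal fst E59) as E59a; pose proof (f_equal snd E59) as E59b; clear E59; cbn [fst snd Fk Qv DQ dbl pt Cof Cmul Csub Cadd Copp C0 q11 q12 q13 q14 q22 q23 q24 q33 q34 q44 zQ] in E59a, E59b.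
    pose proof (K234 (pt (0) (0) (0) (1))) as E60; pose proof (f_equal fst E60) as E60a; pose proof (f_equal snd E60) as E60b; clear E60; cbn [fst snd Fk Qv DQ dbl pt Cof Cmul Csub Cadd Copp C0 q11 q12 q13 q14 q22 q23 q24 q33 q34 q44 zQ] in E60a, E60b.
    repeat split; lra. }
  destruct S34 as (?&?&?&?&?&?&?&?&?&?&?&?).
  subst.

  unfold Qv; cbn [q11 q12 q13 q14 q22 q23 q24 q33 q34 q44].
  change (0%R, 0%R) with C0.
  repeat split; ring.
Qed.
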